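(* Let $X=\{a_1,\dots,a_\ell\}$ be a finite set of $\ell$ distinct points, let $N\ge 2$, let $c_N: X^N\to\mathbb{R}\cup\{+\infty\}$ be an arbitrary cost function, and let $\lambda_*\in\mathcal{P}(X)$. (a) The Kantorovich problem $$\text{minimize } C[\gamma]=\int_{X^N} c_N(x_1,\dots,x_N)\,d\gamma(x_1,\dots,x_N)\ \text{ over }\gamma\in\mathcal{P}_{sym}(X^N)\text{ subject to } M_1\gamma=\lambda_*$$ admits a minimizer which is an SAE state with marginal $\lambda_*$. Moreover, when $c_N$ is symmetric (i.e. invariant under permutations of its $N$ arguments), this SAE state also minimizes $C[\gamma]$ over all $\gamma\in\mathcal{P}(X^N)$ all of whose one-point marginals equal $\lambda_*$. (b) If in addition $c_N(x_1,\dots,x_N)=\sum_{1\le i<j\le N}c(x_i,x_j)$ for some $c:X\times X\to\mathbb{R}\cup\{+\infty\}$, then the minimum value of the Kantorovich problem in (a) equals the minimum of $$I[\alpha,\lambda^{(1)},\dots,\lambda^{(\ell)}]=\sum_{\nu=1}^\ell \alpha^{(\nu)}\Big(\tfrac{N^2}{2}\int_{X\times X}c(x,y)\,d\lambda^{(\nu)}(x)\,d\lambda^{(\nu)}(y)-\tfrac N2\int_X c(x,x)\,d\lambda^{(\nu)}(x)\Big)$$ over $\alpha=(\alpha^{(1)},\dots,\alpha^{(\ell)})\in\mathbb{R}^\ell$ and $\lambda^{(1)},\dots,\lambda^{(\ell)}\in\mathcal{P}_{\frac1N}(X)$ subject to $\alpha^{(\nu)}\ge 0$ for all $\nu$ and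 $\sum_{\nu=1}^\ell\alpha^{(\nu)}\lambda^{(\nu)}=\lambda_*$. Moreover, if $(\alpha,\lambda^{(1)},\dots,\lambda^{(\ell)})$ is any minimizer of this reduced problem, then $\gamma=\sum_{\nu=1}^\ell\alpha^{(\nu)}\psi_N(\lambda^{(\nu)})$ is a minimizer of the Kantorovich problem in (a).
   Context: $\mathcal{P}(X)$ denotes the probability measures on $X$ (identified with vectors $(\lambda_1,\dots,\lambda_\ell)$, $\lambda_i=\lambda(\{a_i\})$), and $\delta_i$ the Dirac measure at $a_i$. The symmetrization operator $S$ on measures on $X^N$ is $(S\gamma)(A_1\times\cdots\times A_N)=\frac1{N!}\sum_{\sigma\in S_N}\gamma(A_{\sigma(1)}\times\cdots\times A_{\sigma(N)})$; $\mathcal{P}_{sym}(X^N)$ is the set of probability measures $\gamma$ on $X^N$ with $S\gamma=\gamma$. For $\gamma\in\mathcal{P}(X^N)$, $M_1\gamma$ is its first one-point marginal, $(M_1\gamma)(A)=\gamma(A\times X^{N-1})$. $\mathcal{P}_{\frac1N}(X)=\{\lambda\in\mathcal{P}(X):\lambda_i\in\frac1N\mathbb{Z}\ \forall i\}$. For $\lambda\in\mathcal{P}_{\frac1N}(X)$, $\psi_N(\lambda)=S(\delta_{a_{i_1}}\otimes\cdots\otimes\delta_{a_{i_N}})$ where $i_1\le\dots\le i_N$ is the unique nondecreasing index sequence in which each index $i$ appears exactly $N\lambda_i$ times. An SAE state with marginal $\lambda_*$ is a probability measure on $X^N$ of the form $\gamma=\sum_{\nu=1}^\ell\alpha^{(\nu)}S(\delta_{T_1(a_\nu)}\otimes\cdots\otimes\delta_{T_N(a_\nu)})$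 for some maps $T_1,\dots,T_N:X\to X$ and weights $\alpha^{(\nu)}\ge 0$ such that $\sum_{\nu=1}^\ell\alpha^{(\nu)}\lambda^{(\nu)}=\lambda_*$, where $\lambda^{(\nu)}=\frac1N\sum_{k=1}^N\delta_{T_k(a_\nu)}$. *)

(* Defs.v *)
From HB Require Import structures.
From mathcomp Require Import all_boot all_order all_algebra all_fingroup.
From mathcomp Require Import reals constructive_ereal.
Set Implicit Arguments. Unset Strict Implicit. Unset Printing Implicit Defensive.
Import Order.TTheory GRing.Theory Num.Theory.
Local Open Scope ring_scope.

(* X = {a_1,...,a_l} is identified with 'I_l (a_i <-> i);
   a point of X^N is a configuration x : 'I_N -> 'I_l;
   a measure on a finite set T is a weight function {ffun T -> R}. *)
Definition config (N l : nat) := {ffun 'I_N -> 'I_l}.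

Section Defs.
Variable R : realType.

Definition is_prob (T : finType) (mu : {ffun T -> R}) : Prop :=
  (forall t, 0 <= mu t) /\ \sum_(t : T) mu t = 1.

Variables N l : nat.

Definition symmetrize (g : {ffun config N l -> R}) : {ffun config N l -> R} :=
  [ffun x : config N l => (N`!%:R)^-1 * \sum_(s : 'S_N) g [ffun i => x (s i)]].

Definition is_sym (g : {ffun config N l -> R}) : Prop := symmetrize g = g.

(* Dirac mass at a configuration y : delta_{y_1} (x) ... (x) delta_{y_N} *)
Definition dirac_cfg (y : config N l) : {ffun config N l -> R} :=
  [ffun x : config N l => (x == y)%:R].

Definition marg (k : 'I_N) (g : {ffun config N l -> R}) : {ffun 'I_l -> R} :=
  [ffun a => \sum_(x : config N l | x k == a) g x].

Definition M1 (g : {ffun config N l -> R}) : {ffun 'I_l -> R} :=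
  [ffun a => \sum_(x : config N l |
      [exists k : 'I_N, (nat_of_ord k == 0)%N && (x k == a)]) g x].

(* cost functional C[gamma] = int c_N dgamma, with 0 * (+oo) = 0 *)
Definition cost (cN : config N l -> \bar R) (g : {ffun config N l -> R}) : \bar R :=
  (\sum_(x : config N l) (g x)%:E * cN x)%E.

Definition lam_of (T : 'I_N -> 'I_l -> 'I_l) (nu : 'I_l) : {ffun 'I_l -> R} :=
  [ffun a => (N%:R)^-1 * \sum_(k < N) (T k nu == a)%:R].

Definition SAE_state (lam_star : {ffun 'I_l -> R}) (g : {ffun config N l -> R}) : Prop :=
  is_prob g /\
  exists (T : 'I_N -> 'I_l -> 'I_l) (alpha : 'I_l -> R),
    (forall nu, 0 <= alpha nu) /\
    (forall a, \sum_(nu < l) alpha nu * lam_of T nu a = lam_star a) /\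
    g = [ffun x : config N l =>
           \sum_(nu < l) alpha nu * symmetrize (dirac_cfg [ffun k => T k nu]) x].

Definition kant_feasible (lam_star : {ffun 'I_l -> R}) (g : {ffun config N l -> R}) : Prop :=
  is_prob g /\ is_sym g /\ M1 g = lam_star.

Definition kant_minimizer (cN : config N l -> \bar R) (lam_star : {ffun 'I_l -> R})
    (g : {ffun config N l -> R}) : Prop :=
  kant_feasible lam_star g /\
  forall g', kant_feasible lam_star g' -> (cost cN g <= cost cN g')%E.

Definition sym_cost (cN : config N l -> \bar R) : Prop :=
  forall (x : config N l) (s : 'S_N), cN [ffun i => x (s i)] = cN x.

Definition pair_cost (c : 'I_l -> 'I_l -> \bar R) (x : config N l) : \bar R :=
  (\sum_(i < N) \sum_(j < N | (i < j)%N) c (x i) (x j))%E.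

Definition in_P1N (lam : {ffun 'I_l -> R}) : Prop :=
  is_prob lam /\ forall i, exists m : int, lam i = m%:~R / N%:R.

(* psi_N(lambda) = S(delta_{a_{i_1}} (x) ... (x) delta_{a_{i_N}}) where
   (i_1 <= ... <= i_N) is the unique nondecreasing index sequence in which each
   index i appears exactly N lambda_i times (picked among configurations;
   0 if no such sequence exists, which never happens for lambda in P_{1/N}). *)
Definition sorted_cfg_for (lam : {ffun 'I_l -> R}) (y : config N l) : bool :=
  [forall k1 : 'I_N, forall k2 : 'I_N, (k1 <= k2)%N ==> (y k1 <= y k2)%N] &&
  [forall i : 'I_l, #|[pred k : 'I_N | y k == i]|%:R == N%:R * lam i].

Definition psiN (lam : {ffun 'I_l -> R}) : {ffun config N l -> R} :=
  match [pick y : config N l | sorted_cfg_for lam y] with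
  | Some y => symmetrize (dirac_cfg y)
  | None => 0
  end.

(* reduced functional
   I = sum_nu alpha_nu ( N^2/2 int int c dlam dlam - N/2 int c(x,x) dlam ),
   with the diagonal terms grouped: coefficient of c(x,x) is
   (N^2 lam_x^2 - N lam_x)/2. *)
Definition I_red (c : 'I_l -> 'I_l -> \bar R) (alpha : 'I_l -> R)
    (Lam : 'I_l -> {ffun 'I_l -> R}) : \bar R :=
  (\sum_(nu < l) (alpha nu)%:E *
     ( (N%:R ^+ 2 / 2)%:E *
         (\sum_(x < l) \sum_(y < l | y != x) (Lam nu x * Lam nu y)%:E * c x y)
       + \sum_(x < l)
           ((N%:R ^+ 2 * Lam nu x ^+ 2 - N%:R * Lam nu x) / 2)%:E * c x x))%E.

Definition red_feasible (lam_star : {ffun 'I_l -> R}) (alpha : 'I_l -> R)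
    (Lam : 'I_l -> {ffun 'I_l -> R}) : Prop :=
  (forall nu, 0 <= alpha nu) /\ (forall nu, in_P1N (Lam nu)) /\
  (forall a, \sum_(nu < l) alpha nu * Lam nu a = lam_star a).

Definition red_minimizer (c : 'I_l -> 'I_l -> \bar R) (lam_star : {ffun 'I_l -> R})
    (alpha : 'I_l -> R) (Lam : 'I_l -> {ffun 'I_l -> R}) : Prop :=
  red_feasible lam_star alpha Lam /\
  forall alpha' Lam', red_feasible lam_star alpha' Lam' ->
    (I_red c alpha Lam <= I_red c alpha' Lam')%E.

Definition psi_comb (alpha : 'I_l -> R) (Lam : 'I_l -> {ffun 'I_l -> R}) :
    {ffun config N l -> R} :=
  [ffun x : config N l => \sum_(nu < l) alpha nu * psiN (Lam nu) x].

End Defs.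

(* Main.v *)
Require Import Defs.
From HB Require Import structures.
From mathcomp Require Import all_boot all_order all_algebra all_fingroup.
From mathcomp Require Import reals constructive_ereal.
From Stdlib Require Import Classical.
From mathcomp Require Import ring lra.
Unset Printing Implicit Defensive.
Import Order.TTheory GRing.Theory Num.Theory.
Local Open Scope ring_scope.
Section Sym.
Variables (R : realType) (N l : nat).
Local Notation C := (config N l).

Definition act (s : 'S_N) (x : C) : C := [ffun i => x (s i)].

Lemma act_mul s t x : act s (act t x) = act (s * t) x.
Proof. by apply/ffunP => i; rewrite !ffunE permM. Qed.

Lemma act1 x : act 1 x = x.
Proof. by apply/ffunP => i; rewrite !ffunE perm1. Qed.

Lemma act_inj s : injective (act s).
Proof.
move=> x y H; rewrite -(act1 x) -(act1 y) -(mulVg s) -!act_mul; by rewrite H.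
Qed.

Lemma sum_act (T : Type) (idx : T) (op : Monoid.com_law idx) (F : C -> T) s :
  \big[op/idx]_x F (act s x) = \big[op/idx]_x F x.
Proof. by rewrite [RHS](reindex_inj (act_inj s)). Qed.

Definition Nf : R := (N`!)%:R.

Lemma Nf_neq0 : Nf != 0.
Proof. by rewrite /Nf pnatr_eq0 -lt0n fact_gt0. Qed.

Lemma sum_perm_const (a : R) : \sum_(s : 'S_N) a = Nf * a.
Proof. by rewrite sumr_const card_Sn mulr_natl. Qed.

Lemma symE (g : {ffun C -> R}) x :
  symmetrize g x = Nf^-1 * \sum_(s : 'S_N) g (act s x).
Proof. by rewrite ffunE. Qed.

Lemma sym_sum (g : {ffun C -> R}) : \sum_x symmetrize g x = \sum_x g x.
Proof.
under eq_bigr do rewrite symE.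
rewrite -mulr_sumr exchange_big /=.
under eq_bigr do rewrite (sum_act _ _ _ (fun x => g x)).
by rewrite sum_perm_const mulrA mulVf ?Nf_neq0 // mul1r.
Qed.

Lemma sym_ge0 (g : {ffun C -> R}) : (forall x, 0 <= g x) ->
  forall x, 0 <= symmetrize g x.
Proof.
move=> H x; rewrite symE mulr_ge0 ?invr_ge0 ?ler0n //.
by apply: sumr_ge0.
Qed.

Lemma sym_idem (g : {ffun C -> R}) : symmetrize (symmetrize g) = symmetrize g.
Proof.
apply/ffunP => x; rewrite symE.
under eq_bigr => s _ do rewrite symE.
have H : forall s, \sum_(t : 'S_N) g (act t (act s x)) = \sum_(t : 'S_N) g (act t x).
  move=> s; under eq_bigr do rewrite act_mul.
  by rewrite (reindex_inj (mulIg (s^-1)%g)) /=; apply: eq_bigr => t _; rewrite mulgKV.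
under eq_bigr => s _ do rewrite H.
by rewrite sum_perm_const mulrA mulVf ?Nf_neq0 // mul1r symE.
Qed.

Lemma is_prob_sym (g : {ffun C -> R}) : is_prob g -> is_prob (symmetrize g).
Proof.
by case=> H1 H2; split; [exact: sym_ge0 | rewrite sym_sum].
Qed.

End Sym.
Arguments act {N l} s x.
Arguments act_mul {N l} s t x.
Arguments act1 {N l} x.
Arguments act_inj {N l} s [x1 x2].
Arguments sum_act {N l T idx op} F s.
Arguments symE {R N l} g x.
Arguments sym_sum {R N l} g.
Arguments sym_idem {R N l} g.
Arguments sum_perm_const {R} N a.
Section Marg.
Variables (R : realType) (N l : nat).
Local Notation C := (config N l).

Lemma perm_avg (F : 'I_N -> R) (k : 'I_N) :
  N%:R * \sum_(s : 'S_N) F (s k) = Nf R N * \sum_j F j.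
Proof.
have Hj : forall j, \sum_(s : 'S_N) F (s k) = \sum_(s : 'S_N) F (s j).
  move=> j; rewrite (reindex_inj (mulgI (tperm k j))) /=.
  by apply: eq_bigr => s _; rewrite permM tpermL.
have -> : N%:R * \sum_(s : 'S_N) F (s k) = \sum_(j < N) \sum_(s : 'S_N) F (s j).
  by under [RHS]eq_bigr => j _ do rewrite -Hj; rewrite sumr_const card_ord mulr_natl.
rewrite exchange_big /=.
have H2 : forall s : 'S_N, \sum_j F (s j) = \sum_j F j.
  by move=> s; rewrite [RHS](reindex_perm s).
under eq_bigr => s _ do rewrite H2.
by rewrite sum_perm_const.
Qed.

Definition ev (y : C) : {ffun 'I_l -> R} :=
  [ffun a => (N%:R)^-1 * \sum_(k < N) (y k == a)%:R].

Lemma ev_ge0 y a : 0 <= ev y a.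
Proof. by rewrite ffunE mulr_ge0 ?invr_ge0 ?ler0n // sumr_ge0 // => k _; rewrite ler0n. Qed.

Lemma ev_sum y : (0 < N)%N -> \sum_a ev y a = 1.
Proof.
move=> N0.
under eq_bigr do rewrite ffunE.
rewrite -mulr_sumr exchange_big /=.
have H : forall k : 'I_N, \sum_(a < l) ((y k == a)%:R : R) = 1.
  move=> k; rewrite (bigD1 (y k)) //= eqxx big1 ?addr0 // => a.
  by rewrite eq_sym => /negPf ->.
under eq_bigr do rewrite H.
by rewrite sumr_const card_ord mulVf // pnatr_eq0 -lt0n.
Qed.

Lemma ev_cnt y a : ev y a = (#|[pred k | y k == a]|)%:R / N%:R.
Proof.
rewrite ffunE mulrC; congr (_ * _).
rewrite -sum1_card natr_sum [RHS]big_mkcond /=; apply: eq_bigr => k _.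
by rewrite inE; case: (y k == a).
Qed.

Lemma marg_E (k : 'I_N) (g : {ffun C -> R}) a :
  marg k g a = \sum_y g y * (y k == a)%:R.
Proof.
rewrite ffunE big_mkcond /=; apply: eq_bigr => y _.
by case: eqP => _; rewrite ?mulr1 ?mulr0.
Qed.

Lemma marg_sym (k : 'I_N) (g : {ffun C -> R}) a :
  marg k (symmetrize g) a = \sum_y g y * ev y a.
Proof.
have N0 : (0 < N)%N by case: k => /= m; case: (N) => //.
rewrite marg_E.
under eq_bigr do rewrite symE -mulrA.
rewrite -mulr_sumr.
under eq_bigr do rewrite mulr_suml.
rewrite exchange_big /=.
have H : forall s : 'S_N, \sum_(y : C) g (act s y) * (y k == a)%:R
                        = \sum_(y : C) g y * (y ((invg s) k) == a)%:R.
  move=> s; rewrite -(sum_act _ (s^-1)%g); apply: eq_bigr => y _.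
  by rewrite act_mul mulgV act1 ffunE.
under eq_bigr do rewrite H.
rewrite exchange_big /= mulr_sumr; apply: eq_bigr => y _.
rewrite -mulr_sumr mulrCA; congr (_ * _).
rewrite (reindex_inj (@invg_inj _)) /=.
under eq_bigr do rewrite invgK.
rewrite ffunE.
have HN : (N%:R : R) != 0 by rewrite pnatr_eq0 -lt0n.
have Hp := perm_avg (fun j => (y j == a)%:R) k.
rewrite -(mulKf HN (\sum_i _)) Hp mulrCA mulKf //.
exact: Nf_neq0.
Qed.

Lemma M1_marg (g : {ffun C -> R}) (k0 : 'I_N) : nat_of_ord k0 = 0%N ->
  M1 g = marg k0 g.
Proof.
move=> Hk; apply/ffunP => a; rewrite !ffunE; apply: eq_bigl => x.
apply/existsP/idP => [[k /andP[/eqP Hk' Hx]]|Hx].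
  by have -> : k0 = k by apply: val_inj; rewrite /= Hk Hk'.
by exists k0; rewrite Hk eqxx.
Qed.
End Marg.
Section E.
Variable R : realType.
Local Open Scope ereal_scope.

Lemma addNy (x y : \bar R) : x != -oo -> y != -oo -> x + y != -oo.
Proof. by case: x; case: y. Qed.

Lemma sumNy (I : Type) (s : seq I) (P : pred I) (F : I -> \bar R) :
  (forall i, P i -> F i != -oo) -> \sum_(i <- s | P i) F i != -oo.
Proof. by move=> H; apply: (big_ind (fun e : \bar R => e != -oo)) => //; exact: addNy. Qed.

Lemma mulNy (r : R) (e : \bar R) : (0 <= r)%R -> e != -oo -> r%:E * e != -oo.
Proof.
move=> r0; case: e => [x| |] // _.
move: r0; rewrite le_eqVlt => /predU1P[<-|r0]; first by rewrite mul0e.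
by rewrite gt0_muley.
Qed.

Lemma adde_def_nn (x y : \bar R) : x != -oo -> y != -oo -> x +? y.
Proof. by case: x; case: y. Qed.

Lemma distr_r (r : R) (I : Type) (s : seq I) (P : pred I) (F : I -> \bar R) :
  (forall i, P i -> F i != -oo) ->
  r%:E * \sum_(i <- s | P i) F i = \sum_(i <- s | P i) r%:E * F i.
Proof.
move=> H; apply: fin_num_sume_distrr => // i j Pi Pj.
by apply: adde_def_nn; apply: H.
Qed.

Lemma distr_l (I : Type) (s : seq I) (P : pred I) (r : I -> R) (e : \bar R) :
  (forall i, P i -> 0 <= r i)%R ->
  (\sum_(i <- s | P i) r i)%:E * e = \sum_(i <- s | P i) (r i)%:E * e.
Proof.
by move=> H; rewrite -sumEFin ge0_sume_distrl // => i Pi; rewrite lee_fin H.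
Qed.

End E.

Section CostLin.
Variables (R : realType) (N l : nat).
Local Notation C := (config N l).
Variable cN : C -> \bar R.
Hypothesis hcN : forall x, cN x != -oo%E.

Lemma cost_lin (J : finType) (w : J -> R) (h : J -> {ffun C -> R}) :
  (forall j, 0 <= w j) -> (forall j x, 0 <= h j x) ->
  cost cN [ffun x => \sum_j w j * h j x] = (\sum_j (w j)%:E * cost cN (h j))%E.
Proof.
move=> w0 h0; rewrite /cost.
have Hx : forall x, ((\sum_j w j * h j x)%:E * cN x =
    \sum_j (w j * h j x)%:E * cN x)%E.
  by move=> x; rewrite distr_l // => j _; rewrite mulr_ge0.
under eq_bigr do rewrite ffunE Hx.
rewrite exchange_big /=; apply: eq_bigr => j _.
rewrite distr_r; last by move=> x _; apply: mulNy.
by apply: eq_bigr => x _; rewrite EFinM muleA.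
Qed.

Lemma cost_dirac y : cost cN (dirac_cfg R y) = cN y.
Proof.
rewrite /cost (bigD1 y) //= ffunE eqxx mul1e big1 ?adde0 // => x /negPf Hx.
by rewrite ffunE Hx mul0e.
Qed.

Lemma sum_pick (g : C -> R) z : \sum_y g y * (z == y)%:R = g z.
Proof.
rewrite (bigD1 z) //= eqxx mulr1 big1 ?addr0 // => y; rewrite eq_sym => /negPf ->.
by rewrite mulr0.
Qed.

Lemma sym_decomp (g : {ffun C -> R}) :
  symmetrize g = [ffun x => \sum_y g y * symmetrize (dirac_cfg R y) x].
Proof.
apply/ffunP => x; rewrite !ffunE.
under [RHS]eq_bigr do rewrite symE mulrCA.
rewrite -mulr_sumr; congr (_ * _).
under [RHS]eq_bigr do rewrite mulr_sumr.
rewrite [RHS]exchange_big /=; apply: eq_bigr => s _.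
by under eq_bigr do rewrite ffunE; rewrite sum_pick.
Qed.

Lemma dirac_ge0 (y x : C) : 0 <= dirac_cfg R y x.
Proof. by rewrite ffunE ler0n. Qed.

Lemma cost_sym_w (g : {ffun C -> R}) : (forall x, 0 <= g x) ->
  cost cN (symmetrize g) =
  (\sum_y (g y)%:E * cost cN (symmetrize (dirac_cfg R y)))%E.
Proof.
move=> g0; rewrite {1}sym_decomp cost_lin //.
by move=> j x; apply: sym_ge0 => z; apply: dirac_ge0.
Qed.

Lemma cost_sym_inv (g : {ffun C -> R}) : sym_cost cN -> (forall x, 0 <= g x) ->
  cost cN (symmetrize g) = cost cN g.
Proof.
move=> hs g0.
have -> : symmetrize g = [ffun x => \sum_(s : 'S_N) (Nf R N)^-1 * [ffun z => g (act s z)] x].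
  by apply/ffunP => x; rewrite symE ffunE mulr_sumr; apply: eq_bigr => s _; rewrite ffunE.
rewrite cost_lin; first last.
- by move=> s x; rewrite ffunE.
- by move=> s; rewrite invr_ge0 ler0n.
have H : forall s : 'S_N, cost cN [ffun z => g (act s z)] = cost cN g.
  move=> s; rewrite /cost -[RHS](sum_act _ s); apply: eq_bigr => x _.
  by rewrite ffunE /act hs.
under eq_bigr do rewrite H.
rewrite -distr_l; last by move=> s _; rewrite invr_ge0 ler0n.
by rewrite sum_perm_const mulfV ?Nf_neq0 // mul1e.
Qed.

End CostLin.
Section LP.
Variables (R : realType) (l : nat) (I : finType).
Variable e : I -> 'I_l -> R.
Variable cb : I -> \bar R.
Variable lam : 'I_l -> R.
Hypothesis cbN : forall i, cb i != -oo%E.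
Hypothesis esum1 : forall i, \sum_a e i a = 1.

Definition feas (w : I -> R) :=
  (forall i, 0 <= w i) /\ forall a, \sum_i w i * e i a = lam a.
Definition supp (w : I -> R) : {set I} := [set i | w i != 0].
Definition freeS (S : {set I}) := forall z : I -> R,
  (forall i, i \notin S -> z i = 0) -> (forall a, \sum_i z i * e i a = 0) ->
  forall i, z i = 0.
Definition costw (w : I -> R) : \bar R := (\sum_i (w i)%:E * cb i)%E.

Lemma costw_fin w : (forall i, 0 <= w i) -> costw w != +oo%E ->
  forall i, w i != 0 -> cb i \is a fin_num.
Proof.
move=> w0 Hc i Hi; apply: contraNT Hc => Hn.
have Hy : cb i = +oo%E.
  by move: (cbN i) Hn; case: (cb i).
rewrite /costw esum_eqy; last by move=> j _; apply: mulNy.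
apply/existsP; exists i; rewrite Hy gt0_muley //.
by rewrite lte_fin lt_def Hi w0.
Qed.

Lemma costw_real w : (forall i, w i != 0 -> cb i \is a fin_num) ->
  costw w = (\sum_i w i * fine (cb i))%:E.
Proof.
move=> H; rewrite /costw -sumEFin; apply: eq_bigr => i _.
have [->|Hi] := eqVneq (w i) 0; first by rewrite mul0e mul0r.
by rewrite EFinM fineK // H.
Qed.

Lemma step w : feas w -> ~ freeS (supp w) ->
  exists w', feas w' /\ (#|supp w'| < #|supp w|)%N /\ (costw w' <= costw w)%E.
Proof.
move=> [w0 wl] Hfree.
have [z [Hz1 [Hz2 [i0 Hi0]]]] : exists z : I -> R,
    (forall i, i \notin supp w -> z i = 0) /\ (forall a, \sum_i z i * e i a = 0)
    /\ exists i, z i != 0.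
  apply: NNPP => H; apply: Hfree => z H1 H2 i; apply: NNPP => Hi; apply: H.
  by exists z; split => //; split => //; exists i; apply/eqP.
have Hzs : \sum_i z i = 0.
  have -> : \sum_i z i = \sum_i z i * \sum_a e i a.
    by apply: eq_bigr => i _; rewrite esum1 mulr1.
  under eq_bigr do rewrite mulr_sumr.
  by rewrite exchange_big /= big1 // => a _; apply: Hz2.
pose f i := fine (cb i).
pose D := \sum_i z i * f i.
pose sg : R := if 0 <= D then 1 else -1.
have sg0 : sg != 0 by rewrite /sg; case: ifP => _; rewrite ?oppr_eq0 oner_eq0.
have sgD : 0 <= sg * D.
  rewrite /sg; case: ifP => HD; first by rewrite mul1r.
  by rewrite mulN1r oppr_ge0; move/negbT: HD; rewrite -ltNge => /ltW.
pose d i := sg * z i.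
have Hd1 : forall i, i \notin supp w -> d i = 0.
  by move=> i Hi; rewrite /d Hz1 // mulr0.
have Hd2 : forall a, \sum_i d i * e i a = 0.
  move=> a; under eq_bigr do rewrite /d -mulrA.
  by rewrite -mulr_sumr Hz2 mulr0.
have Hd3 : \sum_i d i = 0.
  by rewrite -mulr_sumr Hzs mulr0.
have Hd4 : d i0 != 0 by rewrite /d mulf_neq0.
have Hd5 : 0 <= \sum_i d i * f i.
  by under eq_bigr do rewrite /d -mulrA; rewrite -mulr_sumr.
have [j0 Hj0] : exists j, 0 < d j.
  apply: NNPP => H.
  have Hle : forall i, d i <= 0.
    by move=> i; rewrite leNgt; apply/negP => Hi; apply: H; exists i.
  have : forall i, true -> - d i = 0.
    apply: psumr_eq0P; first by move=> i _; rewrite oppr_ge0.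
    by rewrite sumrN Hd3 oppr0.
  by move=> /(_ i0 isT) /eqP; rewrite oppr_eq0 (negPf Hd4).
case: (@arg_minP _ _ _ j0 (fun j => 0 < d j) (fun j => w j / d j) Hj0)
  => js Hjs Hmin.
pose t := w js / d js.
have t0 : 0 <= t by rewrite /t divr_ge0 // ltW.
pose w' i := w i - t * d i.
have Hw'0 : forall i, 0 <= w' i.
  move=> i; rewrite /w' subr_ge0.
  have [Hi|Hi] := ltP 0 (d i).
    by rewrite -ler_pdivlMr //; apply: Hmin.
  by apply: le_trans (w0 i); rewrite mulr_ge0_le0.
have Hw'l : forall a, \sum_i w' i * e i a = lam a.
  move=> a; rewrite /w'.
  under eq_bigr do rewrite mulrBl -mulrA.
  by rewrite sumrB -mulr_sumr Hd2 mulr0 subr0 wl.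
have Hsub : forall i, w i = 0 -> w' i = 0.
  move=> i Hi; rewrite /w' Hi Hd1 ?mulr0 ?subr0 //.
  by rewrite inE Hi eqxx.
have Hjs0 : w' js = 0.
  rewrite /w' /t mulfVK ?subrr //; by rewrite gt_eqF.
have Hjsin : js \in supp w.
  by rewrite inE; apply/negP => /eqP Hw; move: Hjs; rewrite Hd1 ?ltxx // inE Hw eqxx.
exists w'; split; first by split.
split.
  rewrite (cardsD1 js (supp w)) Hjsin add1n ltnS; apply: subset_leq_card.
  apply/subsetP => i; rewrite !inE => Hi; apply/andP; split.
    by apply/negP => /eqP Hij; move: Hi; rewrite Hij Hjs0 eqxx.
  by apply/negP => /eqP Hw; move: Hi; rewrite Hsub ?eqxx.
have [Hy|Hy] := eqVneq (costw w) +oo%E; first by rewrite Hy leey.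
have Hfin := costw_fin w w0 Hy.
rewrite (costw_real w Hfin) costw_real; last first.
  by move=> i Hi; apply: Hfin; apply/negP => /eqP Hw; move: Hi; rewrite Hsub ?eqxx.
rewrite lee_fin /w'.
under eq_bigr do rewrite mulrBl -mulrA.
by rewrite sumrB -mulr_sumr gerBl mulr_ge0.
Qed.

Lemma reduce n : forall w, (#|supp w| <= n)%N -> feas w ->
  exists w', feas w' /\ freeS (supp w') /\ (costw w' <= costw w)%E.
Proof.
elim: n => [|n IH] w Hc Hf.
  have [Hfr|Hfr] := classic (freeS (supp w)); first by exists w.
  by have [w' [_ [Hlt _]]] := step w Hf Hfr; move: Hlt; rewrite ltnNge (leq_trans Hc).
have [Hfr|Hfr] := classic (freeS (supp w)); first by exists w.
have [w' [Hf' [Hlt Hc']]] := step w Hf Hfr.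
have [w'' [H1 [H2 H3]]] := IH w' (leq_trans Hlt Hc) Hf'.
by exists w''; split => //; split => //; apply: le_trans Hc'.
Qed.

Lemma uniq_free w1 w2 : feas w1 -> feas w2 -> freeS (supp w1) ->
  supp w1 = supp w2 -> forall i, w1 i = w2 i.
Proof.
move=> [_ H1] [_ H2] Hfr Hs i; apply/eqP; rewrite -subr_eq0; apply/eqP.
apply: (Hfr (fun i => w1 i - w2 i)) => [j|a].
  move=> Hj; have Hj1 : w1 j = 0 by apply/eqP; move: Hj; rewrite inE negbK.
  have Hj2 : w2 j = 0 by apply/eqP; move: Hj; rewrite Hs inE negbK.
  by rewrite Hj1 Hj2 subrr.
under eq_bigr do rewrite mulrBl.
by rewrite sumrB H1 H2 subrr.
Qed.

Lemma min_rel (T : eqType) (s : seq T) (r : T -> \bar R -> Prop) :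
  (forall t v v', r t v -> r t v' -> v = v') ->
  (exists t v, t \in s /\ r t v) ->
  exists t0 v0, r t0 v0 /\ forall t v, t \in s -> r t v -> (v0 <= v)%E.
Proof.
move=> Hf; elim: s => [|h s IH]; first by case=> t [v []].
move=> Hex.
have [Hs|Hs] := classic (exists t v, t \in s /\ r t v).
  have [t0 [v0 [Hr0 Hmin]]] := IH Hs.
  have [[vh Hh]|Hh] := classic (exists vh, r h vh).
    have [Hle|Hlt] := leP v0 vh.
      exists t0, v0; split => // t v; rewrite inE => /predU1P[->|Ht] Hr.
        by rewrite (Hf _ _ _ Hr Hh).
      exact: (Hmin t v Ht Hr).
    exists h, vh; split => // t v; rewrite inE => /predU1P[->|Ht] Hr.
      by rewrite (Hf _ _ _ Hr Hh).
    exact: le_trans (ltW Hlt) (Hmin _ _ Ht Hr).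
  exists t0, v0; split => // t v; rewrite inE => /predU1P[->|Ht] Hr.
    by exfalso; apply: Hh; exists v.
  exact: (Hmin t v Ht Hr).
have [vh Hh] : exists vh, r h vh.
  case: Hex => t [v []]; rewrite inE => /predU1P[->|Ht] Hr; first by exists v.
  by exfalso; apply: Hs; exists t, v.
exists h, vh; split => // t v; rewrite inE => /predU1P[->|Ht] Hr.
  by rewrite (Hf _ _ _ Hr Hh).
by exfalso; apply: Hs; exists t, v.
Qed.

Lemma LP_min : (exists w, feas w) ->
  exists w0, feas w0 /\ freeS (supp w0) /\ forall w, feas w -> (costw w0 <= costw w)%E.
Proof.
move=> [w Hw].
pose r (S : {set I}) (v : \bar R) :=
  exists w, feas w /\ freeS (supp w) /\ supp w = S /\ v = costw w.
have Hr : forall S v v', r S v -> r S v' -> v = v'.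
  move=> S v v' [w1 [F1 [Fr1 [S1 ->]]]] [w2 [F2 [Fr2 [S2 ->]]]].
  rewrite /costw; apply: eq_bigr => i _.
  by rewrite (uniq_free w1 w2 F1 F2 Fr1) // S1 S2.
have Hex : exists S v, S \in enum {set I} /\ r S v.
  have [w' [H1 [H2 H3]]] := reduce _ w (leqnn _) Hw.
  by exists (supp w'), (costw w'); split; [rewrite mem_enum | exists w'].
have [S0 [v0 [[w0 [F0 [Fr0 [_ ->]]]] Hmin]]] := min_rel _ _ r Hr Hex.
exists w0; split => //; split => // w1 Hw1.
have [w' [H1 [H2 H3]]] := reduce _ w1 (leqnn _) Hw1.
apply: le_trans H3; apply: (Hmin (supp w')); first by rewrite mem_enum.
by exists w'.
Qed.

End LP.
Section FreeCard.
Variables (R : realType) (l : nat) (I : finType).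
Variable e : I -> 'I_l -> R.

Lemma free_card (S : {set I}) : @freeS R l I e S -> (#|S| <= l)%N.
Proof.
move=> Hfr; rewrite leqNgt; apply/negP => Hlt.
pose A : 'M[R]_(#|S|, l) := \matrix_(j, a) e (enum_val j) a.
have Hnf : ~~ row_free A.
  apply/negP => /eqP Hr; have := rank_leq_col A; rewrite Hr => Hle.
  by move: (leq_trans Hlt Hle); rewrite ltnn.
have HK : kermx A != 0 by rewrite kermx_eq0.
pose v := nz_row (kermx A).
have Hv0 : v != 0 by rewrite nz_row_eq0.
have HvA : v *m A = 0 by apply/sub_kermxP; exact: nz_row_sub.
pose z (i : I) := \sum_(j < #|S|) ((enum_val j == i)%:R * v 0 j).
have Hz := Hfr z.
have Hz1 : forall i, i \notin S -> z i = 0.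
  move=> i Hi; rewrite /z big1 // => j _.
  have : enum_val j != i by apply/eqP => Hj; move: (enum_valP j); rewrite Hj (negPf Hi).
  by move/negPf ->; rewrite mul0r.
have Hz2 : forall a, \sum_i z i * e i a = 0.
  move=> a; rewrite /z.
  under eq_bigr do rewrite mulr_suml.
  rewrite exchange_big /=.
  have -> : \sum_(j < #|S|) \sum_i (enum_val j == i)%:R * v 0 j * e i a
          = \sum_(j < #|S|) v 0 j * A j a.
    apply: eq_bigr => j _; rewrite mxE (bigD1 (enum_val j)) //= eqxx mul1r big1 ?addr0 //.
    by move=> i /negPf; rewrite eq_sym => ->; rewrite !mul0r.
  by move/matrixP: HvA => /(_ 0 a); rewrite !mxE.
have Hz0 := Hz Hz1 Hz2.
move/negP: Hv0; apply; apply/eqP/matrixP => i j; rewrite !mxE.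
have -> : i = 0 by apply: ord1.
rewrite -(Hz0 (enum_val j)) /z (bigD1 j) //= eqxx mul1r big1 ?addr0 //.
move=> k Hk; have : enum_val k != enum_val j.
  by apply/negP => /eqP /enum_val_inj Hkj; move: Hk; rewrite Hkj eqxx.
by move/negPf ->; rewrite mul0r.
Qed.
End FreeCard.
Section Enum.
Variables (R : realType) (l : nat) (I : finType).

Lemma enum_rep (w : I -> R) (y0 : I) : (#|[set i | w i != 0%R]| <= l)%N ->
  exists (Y : 'I_l -> I) (al : 'I_l -> R),
    (forall nu, al nu = 0 \/ al nu = w (Y nu)) /\
    forall F : I -> R, \sum_nu al nu * F (Y nu) = \sum_i w i * F i.
Proof.
move=> Hc.
pose s := enum [set i | w i != 0].
have Hs : (size s <= l)%N by rewrite -cardE.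
pose Y (nu : 'I_l) := nth y0 s nu.
pose al (nu : 'I_l) := if (nu < size s)%N then w (Y nu) else 0.
exists Y, al; split; first by move=> nu; rewrite /al; case: ifP; auto.
move=> F.
rewrite [RHS](bigID (fun i => w i != 0)) /= [X in _ + X]big1 ?addr0; last first.
  by move=> i /negPn/eqP ->; rewrite mul0r.
have -> : \sum_(i | w i != 0) w i * F i = \sum_(i <- s) w i * F i.
  by rewrite big_enum; apply: eq_bigl => i; rewrite inE.
rewrite (big_nth y0) big_mkord (big_ord_widen l (fun n => w (nth y0 s n) * F (nth y0 s n)) Hs).
rewrite [RHS]big_mkcond /=; apply: eq_bigr => nu _; rewrite /al /Y.
by case: ifP => _; rewrite ?mul0r.
Qed.
End Enum.
Arguments ev {R N l}.
Arguments marg_sym {R N l} k g a.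
Arguments M1_marg {R N l} g k0 _.
Arguments marg_E {R N l} k g a.
Arguments ev_sum {R N l} y _.
Arguments ev_ge0 {R N l} y a.
Arguments sym_ge0 {R N l} g _ x.
Arguments sym_decomp {R N l} g.
Arguments is_prob_sym {R N l} g _.
Arguments cost_sym_w {R N l cN} _ g _.
Arguments cost_sym_inv {R N l cN} _ g _ _.
Arguments cost_lin {R N l cN} _ [J] w h _ _.
Arguments cost_dirac {R N l cN} y.
Arguments Nf_neq0 {R N}.
Arguments feas {R l I} e lam w.
Arguments supp {R I} w.
Arguments freeS {R l I} e S.
Arguments costw {R I} cb w.
Arguments LP_min {R l I e cb lam} _ _ _.
Arguments free_card {R l I e} S _.
Arguments enum_rep {R l I} w y0 _.
Arguments mulNy {R} r e _ _.
Arguments sumNy {R I} s P F _.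
Arguments sum_pick {R N l} g z.

Section MainA.
Variables (R : realType) (l N : nat).
Hypothesis hN : (2 <= N)%N.
Local Notation C := (config N l).
Variable cN : C -> \bar R.
Hypothesis hcN : forall x, cN x != -oo%E.
Variable lam_star : {ffun 'I_l -> R}.
Hypothesis hlam : is_prob lam_star.

Let N0 : (0 < N)%N. Proof. exact: leq_trans hN. Qed.
Let k0 : 'I_N := Ordinal N0.
Let e := fun (y : C) (a : 'I_l) => ev (R:=R) y a.
Let cb := fun y : C => cost cN (symmetrize (dirac_cfg R y)).

Lemma cost_ninfty (g : {ffun C -> R}) : (forall x, 0 <= g x) -> cost cN g != -oo%E.
Proof. by move=> g0; apply: sumNy => x _; apply: mulNy. Qed.

Let cbN : forall y, cb y != -oo%E.
Proof.
move=> y; apply: cost_ninfty; apply: sym_ge0 => x; exact: dirac_ge0.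
Qed.

Let esum1 : forall y, \sum_a e y a = 1.
Proof. by move=> y; apply: ev_sum. Qed.

Lemma M1_sym (g : {ffun C -> R}) a : M1 (symmetrize g) a = \sum_y g y * e y a.
Proof. by rewrite (M1_marg _ k0) // marg_sym. Qed.

Lemma feas_sum (w : C -> R) : feas e lam_star w -> \sum_y w y = 1.
Proof.
case=> _ Hw; case: hlam => _ <-.
have -> : \sum_y w y = \sum_y w y * \sum_a e y a.
  by apply: eq_bigr => y _; rewrite esum1 mulr1.
under eq_bigr do rewrite mulr_sumr.
rewrite exchange_big /=; apply: eq_bigr => a _; exact: Hw.
Qed.

Lemma feas_kant (w : C -> R) : feas e lam_star w ->
  kant_feasible lam_star (symmetrize [ffun y => w y]).
Proof.
move=> Hw; split; last split.
- apply: is_prob_sym; split; first by move=> y; rewrite ffunE; case: Hw.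
  by under eq_bigr do rewrite ffunE; apply: feas_sum.
- exact: sym_idem.
- apply/ffunP => a; rewrite M1_sym; case: Hw => _ <-.
  by apply: eq_bigr => y _; rewrite ffunE.
Qed.

Lemma kant_feas (g : {ffun C -> R}) : kant_feasible lam_star g ->
  feas e lam_star g /\ cost cN g = costw cb g.
Proof.
move=> [[g0 g1] [Hs Hm]].
have Hs' : symmetrize g = g := Hs.
split.
  split => // a; rewrite -Hm -[in RHS]Hs' M1_sym //.
by rewrite -{1}Hs' (cost_sym_w hcN).
Qed.

Lemma cost_feas (w : C -> R) : feas e lam_star w ->
  cost cN (symmetrize [ffun y => w y]) = costw cb w.
Proof.
move=> [w0 _]; rewrite (cost_sym_w hcN); last by move=> y; rewrite ffunE.
by apply: eq_bigr => y _; rewrite ffunE.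
Qed.

Lemma l_pos : (0 < l)%N.
Proof.
case: hlam => _ H; rewrite lt0n; apply/eqP => Hl0.
have : \sum_(a < l) lam_star a = 0.
  by apply: big1 => a _; have := ltn_ord a; rewrite {2}Hl0.
by rewrite H => /eqP; rewrite oner_eq0.
Qed.

Lemma part_a :
  exists g : {ffun C -> R},
     SAE_state lam_star g /\ kant_minimizer cN lam_star g /\
     (sym_cost cN ->
        forall g' : {ffun C -> R}, is_prob g' ->
          (forall k : 'I_N, marg k g' = lam_star) ->
          (cost cN g <= cost cN g')%E).
Proof.
have Hex : exists w, feas e lam_star w.
  exists (fun y : C => \sum_b lam_star b * (y == [ffun _ => b])%:R).
  split.
    move=> y; apply: sumr_ge0 => b _; apply: mulr_ge0; [by case: hlam | exact: ler0n].
  move=> a.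
  under eq_bigr do rewrite mulr_suml.
  rewrite exchange_big /=.
  have Hb : forall b, \sum_(y : C) lam_star b * (y == [ffun _ => b])%:R * e y a
                    = lam_star b * (b == a)%:R.
    move=> b; under eq_bigr do rewrite -mulrA; rewrite -mulr_sumr; congr (_ * _).
    under eq_bigr do rewrite mulrC eq_sym.
    rewrite (sum_pick (fun y => e y a)) /e ffunE.
    under eq_bigr do rewrite ffunE.
    case: (b == a).
      rewrite sumr_const card_ord mulVf //.
      by rewrite pnatr_eq0 -lt0n.
    by rewrite big1 ?mulr0.
  under eq_bigr do rewrite Hb.
  rewrite (bigD1 a) //= eqxx mulr1 big1 ?addr0 // => b Hb'.
  by rewrite (negPf Hb') mulr0.
have [w0 [Hf0 [Hfr0 Hmin0]]] := LP_min cbN esum1 Hex.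
have Hc0 := free_card _ Hfr0.
pose g0 := symmetrize [ffun y => w0 y].
have Hk0 := feas_kant w0 Hf0.
exists g0; split; last split.
- split; first by case: Hk0.
  pose a0 : 'I_l := Ordinal l_pos.
  have [Y [al [Hal Hrep]]] := enum_rep w0 [ffun _ => a0] Hc0.
  exists (fun k nu => Y nu k), al; split; last split.
  + by move=> nu; case: (Hal nu) => ->; [exact: lexx | case: Hf0].
  + move=> a.
    have -> : \sum_nu al nu * lam_of R (fun k nu => Y nu k) nu a
            = \sum_nu al nu * e (Y nu) a.
      by apply: eq_bigr => nu _; rewrite /e !ffunE.
    by rewrite (Hrep (fun y => e y a)); case: Hf0 => _ ->.
  + rewrite /g0 sym_decomp; apply/ffunP => x; rewrite !ffunE.
    have -> : \sum_nu al nu * symmetrize (dirac_cfg R [ffun k => Y nu k]) x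
            = \sum_nu al nu * symmetrize (dirac_cfg R (Y nu)) x.
      by apply: eq_bigr => nu _; congr (_ * symmetrize (dirac_cfg R _) x); apply/ffunP => k; rewrite ffunE.
    rewrite (Hrep (fun y => symmetrize (dirac_cfg R y) x)).
    by apply: eq_bigr => y _; rewrite ffunE.
- split => // g' Hg'.
  have [Hf' ->] := kant_feas _ Hg'.
  by rewrite /g0 cost_feas //; apply: Hmin0.
- move=> Hsym g' Hp Hmarg.
  have Hg'0 : forall x, 0 <= g' x by case: Hp.
  rewrite -(cost_sym_inv hcN g' Hsym Hg'0).
  have Hk' : kant_feasible lam_star (symmetrize g').
    split; first exact: is_prob_sym.
    split; first exact: sym_idem.
    apply/ffunP => a; rewrite M1_sym.
    have -> : \sum_y g' y * e y a = (N%:R)^-1 * \sum_(k < N) marg k g' a.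
      rewrite mulr_sumr; under [RHS]eq_bigr do rewrite marg_E mulr_sumr.
      rewrite [RHS]exchange_big /=; apply: eq_bigr => y _.
      rewrite /e ffunE mulr_sumr mulr_sumr; apply: eq_bigr => k _.
      by rewrite mulrCA.
    under eq_bigr do rewrite Hmarg.
    by rewrite sumr_const card_ord -[lam_star a *+ N]mulr_natl mulKf // pnatr_eq0 -lt0n.
  have [Hf' ->] := kant_feas _ Hk'.
  by rewrite /g0 cost_feas //; apply: Hmin0.
Qed.

End MainA.
Section PairCost.
Variables (R : realType) (l N : nat).
Hypothesis hN : (2 <= N)%N.
Local Notation C := (config N l).
Variable c : 'I_l -> 'I_l -> \bar R.
Hypothesis hc : forall a b, c a b != -oo%E.

Let N0 : (0 < N)%N. Proof. exact: leq_trans hN. Qed.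
Let NR0 : (N%:R : R) != 0. Proof. by rewrite pnatr_eq0 -lt0n N0. Qed.

Definition term (lam : {ffun 'I_l -> R}) : \bar R :=
  ((N%:R ^+ 2 / 2)%:E *
     (\sum_(x < l) \sum_(y < l | y != x) (lam x * lam y)%:E * c x y)
   + \sum_(x < l) ((N%:R ^+ 2 * lam x ^+ 2 - N%:R * lam x) / 2)%:E * c x x)%E.

Lemma I_red_E alpha Lam :
  I_red N c alpha Lam = (\sum_(nu < l) (alpha nu)%:E * term (Lam nu))%E.
Proof. by []. Qed.

Lemma pc_ninfty (x : C) : pair_cost c x != -oo%E.
Proof. by apply: sumNy => i _; apply: sumNy => j _. Qed.

Lemma ind_sum (I : finType) (P : pred I) (E : I -> \bar R) :
  (\sum_(i | P i) E i = \sum_i ((P i)%:R)%:E * E i)%E.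
Proof. by rewrite big_mkcond; apply: eq_bigr => i _; case: (P i); rewrite ?mul1e ?mul0e. Qed.

Lemma cost_sym_dirac (cN : C -> \bar R) (hcN : forall x, cN x != -oo%E) (y : C) :
  cost cN (symmetrize (dirac_cfg R y)) =
  (\sum_(s : 'S_N) ((Nf R N)^-1)%:E * cN (act s y))%E.
Proof.
have -> : symmetrize (dirac_cfg R y) =
    [ffun x => \sum_(s : 'S_N) (Nf R N)^-1 * dirac_cfg R (act (s^-1)%g y) x].
  apply/ffunP => x; rewrite symE ffunE mulr_sumr; apply: eq_bigr => s _.
  rewrite !ffunE; congr (_ * (nat_of_bool _)%:R).
  apply/eqP/eqP => [<-|->]; by rewrite act_mul ?mulVg ?mulgV act1.
rewrite (cost_lin hcN); first last.
- by move=> s x; exact: dirac_ge0.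
- by move=> s; rewrite invr_ge0 ler0n.
under eq_bigr do rewrite (cost_dirac (cN := cN)).
by rewrite (reindex_inj (@invg_inj _)) /=; apply: eq_bigr => s _; rewrite invgK.
Qed.

Lemma perm_half (p q : 'I_N) :
  \sum_(s : 'S_N) (((s^-1)%g p < (s^-1)%g q)%N%:R : R) = Nf R N * (p != q)%:R / 2.
Proof.
rewrite (reindex_inj (@invg_inj _)) /=.
under eq_bigr do rewrite invgK.
set A := \sum_(s : 'S_N) ((s p < s q)%N%:R : R).
have HB : A = \sum_(s : 'S_N) ((s q < s p)%N%:R : R).
  rewrite /A (reindex_inj (mulgI (tperm p q))) /=.
  by apply: eq_bigr => s _; rewrite !permM tpermL tpermR.
have H2 : A + A = Nf R N * (p != q)%:R.
  rewrite {2}HB -big_split /= -sum_perm_const; apply: eq_bigr => s _.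
  case: ltngtP => H /=; rewrite ?addr0 ?add0r.
  - by have -> : p != q by apply/eqP => E; move: H; rewrite E ltnn.
  - by have -> : p != q by apply/eqP => E; move: H; rewrite E ltnn.
  - by move/val_inj/perm_inj: H => ->; rewrite eqxx.
by rewrite -H2; field.
Qed.

Lemma pick_e (I : finType) (z : I) (r : I -> R) (E : I -> \bar R) :
  (\sum_a ((z == a)%:R * r a)%:E * E a = (r z)%:E * E z)%E.
Proof.
rewrite (bigD1 z) //= eqxx mul1r big1 ?adde0 // => a /negPf.
by rewrite eq_sym => ->; rewrite mul0r mul0e.
Qed.

Lemma group (y : C) (h : 'I_N -> 'I_N -> R) (G : 'I_l -> 'I_l -> \bar R) :
  (forall p q, 0 <= h p q) ->
  (\sum_p \sum_q (h p q)%:E * G (y p) (y q) =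
   \sum_a \sum_b (\sum_p \sum_q (y p == a)%:R * (y q == b)%:R * h p q)%:E * G a b)%E.
Proof.
move=> h0.
have Hpq : forall p q, ((h p q)%:E * G (y p) (y q) =
    \sum_a \sum_b ((y p == a)%:R * (y q == b)%:R * h p q)%:E * G a b)%E.
  move=> p q.
  under [RHS]eq_bigr => a _ do under eq_bigr => b _ do rewrite mulrAC mulrC.
  under [RHS]eq_bigr => a _ do rewrite (pick_e _ (y q) (fun b => (y p == a)%:R * h p q) (G a)).
  by rewrite (pick_e _ (y p) (fun a => h p q) (fun a => G a (y q))).
under eq_bigr => p _ do under eq_bigr => q _ do rewrite Hpq.
have Hab : forall a b,
  ((\sum_p \sum_q (y p == a)%:R * (y q == b)%:R * h p q)%:E * G a b =
   \sum_p \sum_q ((y p == a)%:R * (y q == b)%:R * h p q)%:E * G a b)%E.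
  move=> a b; rewrite distr_l; last first.
    by move=> p _; apply: sumr_ge0 => q _; rewrite !mulr_ge0 ?ler0n.
  apply: eq_bigr => p _; rewrite distr_l //.
  by move=> q _; rewrite !mulr_ge0 ?ler0n.
under [RHS]eq_bigr => a _ do under eq_bigr => b _ do rewrite Hab.
under eq_bigr => p _ do rewrite exchange_big.
rewrite exchange_big /=; apply: eq_bigr => a _.
under eq_bigr => q _ do rewrite exchange_big.
rewrite exchange_big /=; apply: eq_bigr => b _.
by [].
Qed.

Lemma count_pairs (y : C) (a b : 'I_l) :
  \sum_p \sum_q (y p == a)%:R * (y q == b)%:R * ((p != q)%:R / 2) =
  ((\sum_k (y k == a)%:R) * (\sum_k (y k == b)%:R)
     - (a == b)%:R * \sum_k ((y k == a)%:R : R)) / 2.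
Proof.
have Hq : forall p, \sum_q (y p == a)%:R * (y q == b)%:R * ((p != q)%:R / 2)
    = (y p == a)%:R * ((\sum_k (y k == b)%:R) - (y p == b)%:R) / 2 :> R.
  move=> p.
  have -> : \sum_k ((y k == b)%:R : R) - (y p == b)%:R
         = \sum_k (y k == b)%:R * (p != k)%:R.
    rewrite [RHS](bigD1 p) //= eqxx mulr0 add0r [X in X - _](bigD1 p) //= addrAC subrr add0r.
    by apply: eq_bigr => k; rewrite eq_sym => ->; rewrite mulr1.
  rewrite mulr_sumr mulr_suml; apply: eq_bigr => q _; by field.
under eq_bigr do rewrite Hq.
rewrite -mulr_suml; congr (_ / 2).
under eq_bigr do rewrite mulrBr.
rewrite sumrB mulr_suml; congr (_ - _).
rewrite mulr_sumr; apply: eq_bigr => k _.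
by case: (y k =P a) => [->|]; rewrite ?mul1r ?mul0r ?mulr0 ?mulr1.
Qed.


End PairCost.
Arguments pc_ninfty {R l N c} _ x.
Arguments cost_sym_dirac {R l N} cN _ y.
Arguments ind_sum {R I} P E.
Arguments perm_half {R N} p q.
Arguments group {R l N} y h G _.
Arguments count_pairs {R l N} y a b.
Arguments term {R l} N c lam.
Arguments pick_e {R I} z r E.
Arguments I_red_E {R l} N c alpha Lam.
Section PairCost2.
Variables (R : realType) (l N : nat).
Hypothesis hN : (2 <= N)%N.
Local Notation C := (config N l).
Variable c : 'I_l -> 'I_l -> \bar R.
Hypothesis hc : forall a b, c a b != -oo%E.

Let N0 : (0 < N)%N. Proof. exact: leq_trans hN. Qed.
Let NR0 : (N%:R : R) != 0. Proof. by rewrite pnatr_eq0 -lt0n N0. Qed.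

Lemma pc_act (s : 'S_N) (y : C) : pair_cost c (act s y) =
  (\sum_p \sum_q (((s^-1)%g p < (s^-1)%g q)%N%:R)%:E * c (y p) (y q))%E.
Proof.
rewrite /pair_cost.
under eq_bigr do rewrite ind_sum.
rewrite (reindex_perm (s^-1)%g); apply: eq_bigr => p _.
rewrite (reindex_perm (s^-1)%g); apply: eq_bigr => q _.
by rewrite !ffunE !permKV.
Qed.

Lemma cb_pos (y : C) : cost (pair_cost c) (symmetrize (dirac_cfg R y)) =
  (\sum_p \sum_q ((p != q)%:R / 2)%:E * c (y p) (y q))%E.
Proof.
rewrite (cost_sym_dirac _ (pc_ninfty hc)).
under eq_bigr do rewrite pc_act.
have Hs : forall s : 'S_N,
  ((Nf R N)^-1%:E * \sum_p \sum_q (((s^-1)%g p < (s^-1)%g q)%N%:R)%:E * c (y p) (y q) =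
   \sum_p \sum_q ((Nf R N)^-1 * ((s^-1)%g p < (s^-1)%g q)%N%:R)%:E * c (y p) (y q))%E.
  move=> s; rewrite distr_r; last by move=> p _; apply: sumNy => q _; apply: mulNy.
  apply: eq_bigr => p _; rewrite distr_r; last by move=> q _; apply: mulNy.
  by apply: eq_bigr => q _; rewrite muleA EFinM.
under eq_bigr do rewrite Hs.
rewrite exchange_big /=; apply: eq_bigr => p _.
rewrite exchange_big /=; apply: eq_bigr => q _.
rewrite -distr_l; last by move=> s _; rewrite mulr_ge0 ?invr_ge0 ?ler0n.
congr (_%:E * _)%E; rewrite -mulr_sumr perm_half.
by rewrite mulrA mulKf // Nf_neq0.
Qed.

Lemma cb_term (y : C) : cost (pair_cost c) (symmetrize (dirac_cfg R y)) = term N c (ev y).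
Proof.
rewrite cb_pos (group y (fun p q => (p != q)%:R / 2) c); last first.
  by move=> p q; rewrite divr_ge0 ?ler0n.
under eq_bigr => a _ do under eq_bigr => b _ do rewrite count_pairs.
set n := fun a => \sum_k ((y k == a)%:R : R).
have Hev : forall a, ev y a = N%:R^-1 * n a by move=> a; rewrite ffunE.
have Ha : forall a, (\sum_b ((n a * n b - (a == b)%:R * n a) / 2)%:E * c a b =
   ((n a * n a - n a) / 2)%:E * c a a +
   \sum_(b | b != a) ((n a * n b) / 2)%:E * c a b)%E.
  move=> a; rewrite (bigD1 a) //= eqxx mul1r; congr (_ + _)%E.
  by apply: eq_bigr => b; rewrite eq_sym => /negPf ->; rewrite mul0r subr0.
under eq_bigr do rewrite Ha.
rewrite big_split /= /term addeC; congr (_ + _)%E.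
  rewrite distr_r; last first.
    move=> a _; apply: sumNy => b _; apply: mulNy => //.
    by rewrite mulr_ge0 // ev_ge0.
  apply: eq_bigr => a _; rewrite distr_r; last first.
    by move=> b _; apply: mulNy => //; rewrite mulr_ge0 // ev_ge0.
  apply: eq_bigr => b _; rewrite muleA -EFinM; congr (_%:E * _)%E.
  rewrite !Hev; by field.
apply: eq_bigr => a _; congr (_%:E * _)%E; rewrite !Hev; by field.
Qed.

End PairCost2.
Section Psi.
Variables (R : realType) (l N : nat).
Hypothesis hN : (2 <= N)%N.
Local Notation C := (config N l).

Let N0 : (0 < N)%N. Proof. exact: leq_trans hN. Qed.
Let NR0 : (N%:R : R) != 0. Proof. by rewrite pnatr_eq0 -lt0n N0. Qed.

Lemma sorted_ev (lam : {ffun 'I_l -> R}) (y : C) :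
  sorted_cfg_for lam y -> ev y = lam.
Proof.
move=> /andP[_ /forallP H]; apply/ffunP => a; rewrite ev_cnt.
by rewrite (eqP (H a)) mulrC mulKf.
Qed.

Lemma sorted_exists (lam : {ffun 'I_l -> R}) :
  in_P1N N lam -> exists y : C, sorted_cfg_for lam y.
Proof.
move=> [[lam0 lam1] Hm].
have [m Hm'] := fin_all_exists Hm.
have Hn : forall i, N%:R * lam i = (`|m i|%N)%:R.
  move=> i; have Hm0 : 0 <= m i.
    have E : (m i)%:~R = lam i * N%:R :> R by rewrite Hm' mulfVK.
    by rewrite -(ler0z R) E mulr_ge0 ?ler0n.
  by rewrite Hm' mulrC mulfVK // -{1}(gez0_abs Hm0).
pose n i := `|m i|%N.
have Hsum : (\sum_i n i = N)%N.
  apply/eqP; rewrite -(eqr_nat R) natr_sum.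
  under eq_bigr do rewrite -Hn.
  by rewrite -mulr_sumr lam1 mulr1.
have l0 : (0 < l)%N.
  rewrite lt0n; apply/eqP => Hl0.
  have : \sum_(a < l) lam a = 0.
    by apply: big1 => a _; have := ltn_ord a; rewrite {2}Hl0.
  by rewrite lam1 => /eqP; rewrite oner_eq0.
pose a0 : 'I_l := Ordinal l0.
pose s0 := flatten [seq nseq (n i) i | i <- enum 'I_l].
pose leI := fun a b : 'I_l => (a <= b)%N.
pose s1 := sort leI s0.
have Hcnt : forall a, count_mem a s1 = n a.
  move=> a; rewrite count_sort count_flatten -map_comp sumnE big_map big_enum /=.
  rewrite (bigD1 a) //= count_nseq /= eqxx mul1n big1 ?addn0 // => i Hi.
  by rewrite count_nseq /= (negPf Hi).
have Hsize : size s1 = N.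
  rewrite -Hsum -(count_predT s1) count_sort count_flatten -map_comp sumnE big_map big_enum /=.
  by apply: eq_bigr => i _; rewrite count_nseq /= mul1n.
pose y : C := [ffun k : 'I_N => nth a0 s1 k].
exists y; apply/andP; split.
  apply/forallP => k1; apply/forallP => k2; apply/implyP => Hk.
  rewrite !ffunE.
  have Hs : sorted leI s1 by apply: sort_sorted => a b; exact: leq_total.
  have Htr : transitive leI by move=> b a d; exact: leq_trans.
  have Hrf : reflexive leI by move=> a; exact: leqnn.
  have := sorted_leq_nth Htr Hrf a0 Hs; move/(_ k1 k2).
  by rewrite !inE Hsize !ltn_ord; apply.
apply/forallP => a; rewrite Hn -/(n a) -Hcnt eqr_nat.
rewrite -sum1_count (big_nth a0) Hsize big_mkord -sum1_card.
by apply/eqP; apply: eq_bigl => k; rewrite inE ffunE.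
Qed.

Lemma psiN_ok (lam : {ffun 'I_l -> R}) : in_P1N N lam ->
  exists y : C, psiN N lam = symmetrize (dirac_cfg R y) /\ ev y = lam.
Proof.
move=> H; rewrite /psiN; case: pickP => [y Hy|Hn].
  by exists y; split => //; apply: sorted_ev.
by have [y Hy] := sorted_exists lam H; rewrite Hn in Hy.
Qed.

End Psi.
Lemma ev_P1N (R : realType) (N l : nat) (hN : (2 <= N)%N) (y : config N l) :
  in_P1N N (ev (R:=R) y).
Proof.
have N0 : (0 < N)%N by exact: leq_trans hN.
split; first by split; [exact: ev_ge0 | exact: ev_sum].
by move=> i; exists (#|[pred k | y k == i]|)%:Z; rewrite ev_cnt.
Qed.

Theorem theorem5p3 (R : realType) (l N : nat) (hN : (2 <= N)%N)
    (cN : config N l -> \bar R) (hcN : forall x, cN x != -oo%E)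
    (lam_star : {ffun 'I_l -> R}) (hlam : is_prob lam_star) :
  (* (a) *)
  (exists g : {ffun config N l -> R},
     SAE_state lam_star g /\ kant_minimizer cN lam_star g /\
     (sym_cost cN ->
        forall g' : {ffun config N l -> R}, is_prob g' ->
          (forall k : 'I_N, marg k g' = lam_star) ->
          (cost cN g <= cost cN g')%E)) /\
  (* (b) *)
  (forall c : 'I_l -> 'I_l -> \bar R, (forall x y, c x y != -oo%E) ->
     (forall x, cN x = pair_cost c x) ->
     (exists (alpha : 'I_l -> R) (Lam : 'I_l -> {ffun 'I_l -> R}),
        red_minimizer N c lam_star alpha Lam) /\
     (forall (g : {ffun config N l -> R}) (alpha : 'I_l -> R)
             (Lam : 'I_l -> {ffun 'I_l -> R}),
        kant_minimizer cN lam_star g -> red_minimizer N c lam_star alpha Lam ->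
        cost cN g = I_red N c alpha Lam) /\
     (forall (alpha : 'I_l -> R) (Lam : 'I_l -> {ffun 'I_l -> R}),
        red_minimizer N c lam_star alpha Lam ->
        kant_minimizer cN lam_star (psi_comb N alpha Lam))).
Proof.
have PA := part_a R l N hN cN hcN lam_star hlam.
split; first exact: PA.
move=> c hc hpc.
have Hcost : forall g, cost cN g = cost (pair_cost c) g.
  by move=> g; apply: eq_bigr => x _; rewrite hpc.
have [g0 [Hsae [Hkm _]]] := PA.
case: Hsae => Hprob [T [al [Hal [Hlam Hg0]]]].
pose Y nu : config N l := [ffun k => T k nu].
pose Lam0 nu := lam_of R T nu.
have Hev : forall nu, ev (Y nu) = Lam0 nu.
  by move=> nu; apply/ffunP => a; rewrite !ffunE; congr (_ * _); apply: eq_bigr => k _; rewrite ffunE.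
have cost_comb : forall (be : 'I_l -> R) (Z : 'I_l -> config N l), (forall nu, 0 <= be nu) ->
    cost (pair_cost c) [ffun x => \sum_nu be nu * symmetrize (dirac_cfg R (Z nu)) x]
    = (\sum_nu (be nu)%:E * term N c (ev (Z nu)))%E.
  move=> be Z Hbe.
  rewrite (cost_lin (pc_ninfty hc) be (fun nu => symmetrize (dirac_cfg R (Z nu)))) //.
    by apply: eq_bigr => nu _; rewrite cb_term.
  by move=> nu x; apply: sym_ge0 => z; apply: dirac_ge0.
have HV : cost cN g0 = I_red N c al Lam0.
  rewrite Hcost Hg0 (cost_comb al Y Hal) I_red_E; apply: eq_bigr => nu _.
  by rewrite Hev.
have Hfeas0 : red_feasible N lam_star al Lam0.
  split => //; split => // nu; rewrite -Hev; exact: ev_P1N.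
have Hpsi : forall be Lam, red_feasible N lam_star be Lam ->
    kant_feasible lam_star (psi_comb N be Lam) /\
    cost cN (psi_comb N be Lam) = I_red N c be Lam.
  move=> be Lam [Hbe [HL HS]].
  have [Z HZ] := fin_all_exists (fun nu => psiN_ok R l N hN (Lam nu) (HL nu)).
  have Hpc : psi_comb N be Lam =
      [ffun x => \sum_nu be nu * symmetrize (dirac_cfg R (Z nu)) x].
    apply/ffunP => x; rewrite !ffunE; apply: eq_bigr => nu _.
    by case: (HZ nu) => ->.
  split; last first.
    rewrite Hcost Hpc (cost_comb be Z Hbe) I_red_E; apply: eq_bigr => nu _.
    by case: (HZ nu) => _ ->.
  pose w (y : config N l) := \sum_nu be nu * (Z nu == y)%:R.
  have Hw : feas (fun y a => ev y a) lam_star w.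
    split.
      by move=> y; apply: sumr_ge0 => nu _; rewrite mulr_ge0 ?ler0n.
    move=> a; rewrite -HS.
    under eq_bigr do rewrite mulr_suml.
    rewrite exchange_big /=; apply: eq_bigr => nu _.
    under eq_bigr do rewrite -mulrA.
    rewrite -mulr_sumr; congr (_ * _).
    under eq_bigr do rewrite mulrC.
    by rewrite sum_pick; case: (HZ nu) => _ ->.
  have Heq : psi_comb N be Lam = symmetrize [ffun y => w y].
    rewrite Hpc sym_decomp; apply/ffunP => x; rewrite !ffunE.
    under [RHS]eq_bigr do rewrite ffunE mulr_suml.
    rewrite [RHS]exchange_big /=; apply: eq_bigr => nu _.
    under eq_bigr do rewrite -mulrA.
    rewrite -mulr_sumr; congr (_ * _).
    under eq_bigr do rewrite mulrC.
    by rewrite sum_pick.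
  by rewrite Heq; apply: (feas_kant R l N hN lam_star hlam).
split.
  exists al, Lam0; split => // be Lam Hf.
  have [Hk Hc] := Hpsi be Lam Hf.
  by rewrite -HV -Hc; apply: (proj2 Hkm).
split.
  move=> g be Lam [Hgk Hgmin] [HfL HLmin].
  have [Hk Hc] := Hpsi be Lam HfL.
  apply/le_anti/andP; split.
    by rewrite -Hc; apply: Hgmin.
  apply: le_trans (HLmin _ _ Hfeas0) _.
  by rewrite -HV; apply: (proj2 Hkm).
move=> be Lam [HfL HLmin].
have [Hk Hc] := Hpsi be Lam HfL.
split => // g' Hg'.
rewrite Hc; apply: le_trans (HLmin _ _ Hfeas0) _.
by rewrite -HV; apply: (proj2 Hkm).
Qed.
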